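(* Assume $$\lim_{h\to0}\frac{C_1\kappa\,h^{-1/2}}{\big(\Delta^{-1}(C_1h^{-1/2})\big)^2}=\infty .$$ Then there are constants $C_1,C_2>0$, depending on the perturbation $H$ and on $\kappa$ but not on $t$ or $h$, such that for all sufficiently small $h$, all $t\in(0,t_0)$ and all distinct $m,m'\in\mathbb Z^d$ with $I_m,I_{m'}\in D$, $m\in\mathcal M_h(t)$ and $|I_m-I_{m'}|\le h\,\Delta^{-1}(C_1h^{-1/2})$, one has $$|\mu_m-\mu_{m'}|\ge C_2h^{3/2}.$$
   Context: Setting: $D\subset\mathbb R^d$ a bounded convex domain of actions; $K^0(I;t,h)=\sum_{0\le j}K_j(I;t)h^j$ is the real-valued integrable part of the quantum Birkhoff normal form of $P_h(t)$, with $K_j$ smooth with derivatives bounded uniformly in $t\in(0,t_0)$, and $K_0(I;t)$ is the integrable part of the Birkhoff normal form of the classical Hamiltonian. $\Delta$ is a $\sigma$-approximation function (continuous, strictly increasing, unbounded, $\log\Delta(s)/s^{1/\sigma}\searrow0$, $\int_\varsigma^\infty\log\Delta(s)s^{-1-1/\sigma}ds<\infty$), $\Delta^{-1}$ its inverse. $E_\kappa(t)\subset D$ is the set of actions $I$ with $\omega=\nabla_IK_0(I;t)$ satisfying $|\langle\omega,k\rangle|\ge\kappa/\Delta(|k|)$ for all $k\in\mathbb Z^d\setminus\{0\}$. $I_m=h(m+\vartheta/4)$ for $m\in\mathbb Z^d$, $\vartheta$ the Maslov class of the tori; $\mathcal M_h(t)=\{m\in\mathbb Z^d:\operatorname{dist}(E_\kappa(t),h(m+\vartheta/4))\le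 Lh\}$ for a fixed $L>0$; quasi-eigenvalues $\mu_m=\mu_m(t;h)=K^0(I_m;t,h)$. *)

(* Defs.v *)
From HB Require Import structures.
From mathcomp Require Import all_boot all_order all_algebra.
From mathcomp Require Import all_classical all_reals all_analysis.
Set Implicit Arguments. Unset Strict Implicit. Unset Printing Implicit Defensive.
Import Order.TTheory GRing.Theory Num.Theory.
Import numFieldNormedType.Exports.
Local Open Scope classical_set_scope.
Local Open Scope ring_scope.

Section Defs.
Variables (R : realType) (d : nat).
Notation vec := 'rV[R]_d.

Definition enorm (v : vec) : R := Num.sqrt (\sum_(i < d) v 0 i ^+ 2).

Definition inner (u v : vec) : R := \sum_(i < d) u 0 i * v 0 i.

Definition ebasis (i : 'I_d) : vec := \row_j (if j == i then 1 else 0).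

Definition grad (f : vec -> R) (x : vec) : vec := \row_i ('D_(ebasis i) f x).

Fixpoint iter_dd (f : vec -> R) (vs : seq vec) : vec -> R :=
  match vs with
  | [::] => f
  | v :: vs' => 'D_v (iter_dd f vs')
  end.

Definition smooth_on (D : set vec) (f : vec -> R) : Prop :=
  forall (vs : seq vec) (x : vec), D x -> differentiable (iter_dd f vs) x.

Definition bounded_convex_domain (D : set vec) : Prop :=
  open D /\ D !=set0 /\
  (exists M : R, forall x, D x -> enorm x <= M) /\
  (forall x y (s : R), D x -> D y -> 0 <= s <= 1 -> D (x + s *: (y - x))).

Definition sigma_approx (sigma : R) (Delta : R -> R) : Prop :=
  {within `[0, +oo[, continuous Delta} /\
  (forall s1 s2, 0 <= s1 -> s1 < s2 -> Delta s1 < Delta s2) /\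
  (forall s, 0 <= s -> 0 < Delta s) /\
  (forall M, exists s, 0 <= s /\ M < Delta s) /\
  exists vsig : R, 0 < vsig /\
    (forall s1 s2, vsig <= s1 -> s1 <= s2 ->
        ln (Delta s2) / powR s2 sigma^-1 <= ln (Delta s1) / powR s1 sigma^-1) /\
    ((fun s => ln (Delta s) / powR s sigma^-1) @ +oo --> 0) /\
    (lebesgue_measure).-integrable `[vsig, +oo[
        (fun s => (ln (Delta s) * powR s (- 1 - sigma^-1))%:E).

Definition is_inverse_of (Delta Dinv : R -> R) : Prop :=
  forall y, Delta 0 <= y -> 0 <= Dinv y /\ Delta (Dinv y) = y.

Definition rvec (k : 'rV[int]_d) : vec := \row_i ((k 0 i)%:~R).

Definition Iq (h : R) (vartheta m : 'rV[int]_d) : vec :=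
  \row_i (h * ((m 0 i)%:~R + (vartheta 0 i)%:~R / 4)).

(* the Diophantine set E_kappa(t), given K0 = K_0(.;t) *)
Definition Ekappa (D : set vec) (K0 : vec -> R) (Delta : R -> R) (kappa : R)
  : set vec :=
  [set I | D I /\ forall k : 'rV[int]_d, k != 0 ->
      kappa / Delta (enorm (rvec k)) <= `| inner (grad K0 I) (rvec k) |].

(* distance (in \bar R) from a point to a set; +oo for the empty set *)
Definition setdist (E : set vec) (x : vec) : \bar R :=
  ereal_inf [set (enorm (x - y))%:E | y in E].

Definition Mh (D : set vec) (K0 : vec -> R) (Delta : R -> R) (kappa L h : R)
  (vartheta : 'rV[int]_d) : set 'rV[int]_d :=
  [set m | (setdist (Ekappa D K0 Delta kappa) (Iq h vartheta m) <= (L * h)%:E)%E].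

End Defs.

(* Main.v *)
Require Import Defs.
From HB Require Import structures.
From mathcomp Require Import all_boot all_order all_algebra.
From mathcomp Require Import all_classical all_reals all_analysis.
From mathcomp Require Import ring lra.
Import Order.TTheory GRing.Theory Num.Theory.
Import numFieldNormedType.Exports.
Local Open Scope classical_set_scope.
Local Open Scope ring_scope.

Section L.
Variables (R : realType) (d : nat).
Notation vec := 'rV[R]_d.

Lemma seg_fun (g : vec -> R) (x w : vec) (s : R) :
  (fun h : R => h^-1 *: ((fun s => g (x + s *: w)) (h *: 1 + s) - (fun s => g (x + s *: w)) s))
  = (fun h : R => h^-1 *: (g (h *: w + (x + s *: w)) - g (x + s *: w))).
Proof.
apply/funext => h /=; congr (_ *: (g _ - _)).
by rewrite scalerDl addrCA; congr (_ + (_ + _)); rewrite -[h *: 1]/(h * 1) mulr1.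
Qed.

Lemma seg_derive (g : vec -> R) (x w : vec) (s : R) :
  derive (fun s : R => g (x + s *: w)) s 1 = derive g (x + s *: w) w.
Proof. by rewrite /derive seg_fun. Qed.

Lemma seg_derivable (g : vec -> R) (x w : vec) (s : R) :
  derivable g (x + s *: w) w -> derivable (fun s : R => g (x + s *: w)) s 1.
Proof. by rewrite /derivable seg_fun. Qed.
Lemma seg_mvt (D : set vec) (g : vec -> R) (x y : vec) :
  (forall s : R, 0 <= s <= 1 -> D (x + s *: (y - x))) ->
  (forall z, D z -> differentiable g z) ->
  exists2 s : R, 0 <= s <= 1 & g y - g x = 'D_(y - x) g (x + s *: (y - x)).
Proof.
move=> hseg hdiff.
set w := y - x.
have hder : forall s : R, 0 <= s <= 1 -> derivable (fun s : R => g (x + s *: w)) s 1.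
  by move=> s hs; apply: seg_derivable; apply: diff_derivable; apply: hdiff; apply: hseg.
have := @MVT_segment R (fun s : R => g (x + s *: w)) (fun s => 'D_w g (x + s *: w)) 0 1 ler01.
case.
- move=> s; rewrite in_itv /= => /andP [h0 h1].
  rewrite -seg_derive; apply: derivableP; apply: hder.
  by rewrite (ltW h0) (ltW h1).
- apply: derivable_within_continuous => s; rewrite in_itv /= => hs.
  exact: hder.
- move=> c; rewrite in_itv /= => hc; rewrite subr0 mulr1 scale1r scale0r addr0.
  have -> : x + w = y by rewrite /w addrC subrK.
  by move=> ->; exists c.
Qed.
Lemma row_decomp (u : vec) : u = \sum_(i < d) u 0 i *: ebasis R i.
Proof.
apply/rowP => j; rewrite summxE.
under eq_bigr do rewrite !mxE.
rewrite (bigD1 j) //= eqxx mulr1 big1 ?addr0 // => i /negbTE.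
by rewrite eq_sym => ->; rewrite mulr0.
Qed.

Lemma dd_decomp (g : vec -> R) z u : differentiable g z ->
  'D_u g z = \sum_(i < d) u 0 i * 'D_(ebasis R i) g z.
Proof.
move=> hg; rewrite deriveE // {1}(row_decomp u) linear_sum.
by apply: eq_bigr => i _; rewrite linearZ /= deriveE.
Qed.

Definition l1 (v : vec) : R := \sum_(i < d) `|v 0 i|.

Lemma l1_ge0 (v : vec) : 0 <= l1 v.
Proof. by apply: sumr_ge0 => i _. Qed.

Lemma dd_bound (g : vec -> R) z u B : differentiable g z ->
  (forall i, `|'D_(ebasis R i) g z| <= B) -> `|'D_u g z| <= B * l1 u.
Proof.
move=> hg hB; rewrite dd_decomp //.
apply: le_trans (ler_norm_sum _ _ _) _.
rewrite /l1 mulr_sumr; apply: ler_sum => i _.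
by rewrite normrM mulrC ler_wpM2r.
Qed.

Lemma enorm_ge0 (v : vec) : 0 <= enorm v.
Proof. exact: sqrtr_ge0. Qed.

Lemma coord_le (v : vec) i : `|v 0 i| <= enorm v.
Proof.
rewrite -sqrtr_sqr; apply: ler_wsqrtr.
rewrite (bigD1 i) //= lerDl; apply: sumr_ge0 => j _; exact: sqr_ge0.
Qed.

Lemma l1_le (v : vec) : l1 v <= d%:R * enorm v.
Proof.
rewrite /l1; apply: le_trans (_ : \sum_(i < d) enorm v <= _).
  by apply: ler_sum => i _; apply: coord_le.
by rewrite sumr_const card_ord mulr_natl.
Qed.

Lemma l1_tri (a b c : vec) : l1 (a - b) <= l1 (a - c) + l1 (c - b).
Proof.
rewrite /l1 -big_split /=; apply: ler_sum => i _; rewrite !mxE.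
exact: ler_distD.
Qed.

Lemma l1Z (s : R) (v : vec) : l1 (s *: v) = `|s| * l1 v.
Proof.
by rewrite /l1 mulr_sumr; apply: eq_bigr => i _; rewrite !mxE normrM.
Qed.

Lemma enormZ (s : R) (v : vec) : enorm (s *: v) = `|s| * enorm v.
Proof.
rewrite /enorm (_ : \sum_(i < d) _ = s ^+ 2 * \sum_(i < d) v 0 i ^+ 2).
  by rewrite sqrtrM ?sqr_ge0 // sqrtr_sqr.
by rewrite mulr_sumr; apply: eq_bigr => i _; rewrite !mxE exprMn.
Qed.

Lemma enorm_ebasis (i : 'I_d) : enorm (ebasis R i) = 1.
Proof.
rewrite /enorm (bigD1 i) //= big1 ?addr0 ?mxE ?eqxx ?expr1n ?sqrtr1 //.
by move=> j /negbTE hj; rewrite mxE hj expr0n.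
Qed.

Lemma enorm_rvec_ge1 (k : 'rV[int]_d) : k != 0 -> 1 <= enorm (rvec R k).
Proof.
move=> hk.
have [i hi] : exists i, k 0 i != 0.
  apply/existsP; apply: contraR hk => /existsPn hk.
  by apply/eqP/rowP => i; rewrite mxE; apply/eqP; move: (hk i); rewrite negbK.
apply: le_trans (coord_le _ i); rewrite mxE -intr_norm ler1z.
by rewrite -gtz0_ge1 normr_gt0.
Qed.
Lemma core (D : set vec) (f F : vec -> R) (Delta : R -> R)
  (kappa L h X Y A B : R) (x y E : vec) (k : 'rV[int]_d) :
  (forall a b (s : R), D a -> D b -> 0 <= s <= 1 -> D (a + s *: (b - a))) ->
  (forall z, D z -> differentiable f z) ->
  (forall i z, D z -> differentiable ('D_(ebasis R i) f) z) ->
  (forall i j z, D z -> `|'D_(ebasis R i) ('D_(ebasis R j) f) z| <= B) ->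
  (forall z, D z -> differentiable (fun I => F I - f I) z) ->
  (forall i z, D z -> `|'D_(ebasis R i) (fun I => F I - f I) z| <= A * h) ->
  D x -> D y -> k != 0 -> x - y = h *: rvec R k ->
  Ekappa D f Delta kappa E -> enorm (x - E) <= (L + 1) * h ->
  enorm (x - y) <= h * X -> 0 < h -> 0 < kappa ->
  (forall s1 s2, 0 <= s1 -> s1 < s2 -> Delta s1 < Delta s2) ->
  (forall s, 0 <= s -> 0 < Delta s) -> Delta X = Y -> 0 <= A -> 0 <= B ->
  h * kappa / Y - A * h * (d%:R * (h * X))
    - B * (d%:R * (h * X)) * (d%:R * (h * X) + d%:R * ((L + 1) * h))
   <= `|F x - F y|.
Proof.
move=> hconv hf1 hf2 hB hG1 hG2 Dx Dy hk hv [DE hEk] hxE hxy h0 k0 hmono hpos hXY hA0 hB0.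
set v := x - y.
have hseg : forall a b, D a -> D b -> forall s : R, 0 <= s <= 1 -> D (a + s *: (b - a)).
  by move=> a b Da Db s hs; apply: hconv.
have [s hs hGs] := @seg_mvt D _ y x (hseg y x Dy Dx) hG1.
have [s' hs' hfs] := @seg_mvt D _ y x (hseg y x Dy Dx) hf1.
set pc := y + s' *: (x - y).
have Dpc : D pc by apply: hseg.
have eqF : F x - F y = ((F x - f x) - (F y - f y)) + (f x - f y) by ring.
have hDE : 'D_v f E = h * inner (grad f E) (rvec R k).
  rewrite /v hv deriveE ?linearZ /=; last exact: hf1.
  rewrite -deriveE; last exact: hf1.
  rewrite dd_decomp; last exact: hf1.
  congr (_ * _); rewrite /inner; apply: eq_bigr => i _.
  by rewrite /grad !mxE mulrC.
have hnk : enorm (rvec R k) <= X.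
  have : h * enorm (rvec R k) <= h * X.
    by have := enormZ h (rvec R k); rewrite -hv ger0_norm ?(ltW h0) // => <-.
  by rewrite ler_pM2l.
have hk1 := enorm_rvec_ge1 _ hk.
have hDk : Delta (enorm (rvec R k)) <= Y.
  rewrite -hXY; move: hnk; rewrite le_eqVlt => /orP [/eqP -> //|hlt].
  by apply/ltW/hmono => //; apply: enorm_ge0.
have hDkp : 0 < Delta (enorm (rvec R k)) by apply: hpos; apply: enorm_ge0.
have hmain : h * kappa / Y <= `|'D_v f E|.
  rewrite hDE normrM gtr0_norm // -mulrA ler_pM2l //.
  apply: le_trans (hEk k hk).
  rewrite ler_pM2l // lef_pV2 // ?posrE //.
  exact: lt_le_trans hDkp hDk.
have hl1v : l1 v <= d%:R * (h * X).
  apply: le_trans (l1_le v) _; rewrite ler_wpM2l //.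
have hl1v0 := l1_ge0 v.
have herr1 : `|(F x - f x) - (F y - f y)| <= A * h * (d%:R * (h * X)).
  rewrite hGs; apply: le_trans (@dd_bound _ _ _ (A * h) _ _) _.
  - by apply: hG1; apply: hseg.
  - by move=> i; apply: hG2; apply: hseg.
  by rewrite ler_wpM2l // mulr_ge0 // ltW.
have hsum : 'D_v f pc - 'D_v f E
    = \sum_(j < d) v 0 j * ('D_(ebasis R j) f pc - 'D_(ebasis R j) f E).
  rewrite (dd_decomp _ _ v (hf1 _ Dpc)) (dd_decomp _ _ v (hf1 _ DE)) -sumrB.
  by apply: eq_bigr => j _; rewrite mulrBr.
have hl1pcE : l1 (pc - E) <= d%:R * (h * X) + d%:R * ((L + 1) * h).
  apply: le_trans (l1_tri pc E x) _; apply: lerD.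
  - have -> : pc - x = (s' - 1) *: v.
      by apply/rowP => i; rewrite !mxE; ring.
    rewrite l1Z; apply: le_trans hl1v; apply: ler_piMl => //.
    case/andP: hs' => hs1 hs2; rewrite ler_norml; apply/andP; split; lra.
  - apply: le_trans (l1_le _) _; rewrite ler_wpM2l //.
have herr2j : forall j : 'I_d,
    `|'D_(ebasis R j) f pc - 'D_(ebasis R j) f E| <= B * l1 (pc - E).
  move=> j.
  have [s2 hs2 ->] := @seg_mvt D ('D_(ebasis R j) f) E pc (hseg E pc DE Dpc) (hf2 j).
  apply: le_trans (@dd_bound _ _ _ B _ _) _ => //.
  - by apply: hf2; apply: hseg.
  - by move=> i; apply: hB; apply: hseg.
have herr2 : `|'D_v f pc - 'D_v f E| <= l1 v * (B * l1 (pc - E)).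
  rewrite hsum; apply: le_trans (ler_norm_sum _ _ _) _.
  rewrite /l1 mulr_suml; apply: ler_sum => j _; rewrite normrM.
  by apply: ler_wpM2l.
have herr2' : l1 v * (B * l1 (pc - E)) <=
    B * (d%:R * (h * X)) * (d%:R * (h * X) + d%:R * ((L + 1) * h)).
  rewrite mulrCA -mulrA; apply: ler_wpM2l => //.
  by apply: ler_pM => //; apply: l1_ge0.
have eqF2 : F x - F y = ((F x - f x) - (F y - f y)) + 'D_v f E + ('D_v f pc - 'D_v f E).
  by rewrite eqF hfs /v; ring.
set a := (F x - f x) - (F y - f y).
set b := 'D_v f E.
set c := 'D_v f pc - 'D_v f E.
have htri : `|b| <= `|F x - F y| + `|a| + `|c|.
  rewrite eqF2 (_ : b = (a + b + c) + (- a) + (- c)); last by ring.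
  apply: le_trans (ler_normD _ _) _; rewrite normrN lerD2r.
  by apply: le_trans (ler_normD _ _) _; rewrite normrN.
lra.
Qed.

End L.

Lemma arith (R : realType) (A B dd L h r X C1 kappa : R) :
  0 <= A -> 0 <= B -> 0 <= dd -> 0 < L -> 0 < r -> h = r ^+ 2 -> 1 <= X ->
  0 < C1 -> 0 < kappa ->
  2 * (A * dd + B * dd ^+ 2 * (L + 2) + 1) * C1 ^+ 2 * X ^+ 2 * r <= C1 * kappa ->
  kappa / (2 * C1) * (h * r) <= h * kappa / (C1 / r) - A * h * (dd * (h * X))
    - B * (dd * (h * X)) * (dd * (h * X) + dd * ((L + 1) * h)).
Proof.
move=> hA hB hd hL hr -> hX hC hk hN.
set M := A * dd + B * dd ^+ 2 * (L + 2).
have hM : 0 <= M by rewrite /M addr_ge0 ?mulr_ge0 // ?sqr_ge0 //; lra.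
have hX0 : 0 <= X by lra.
have e1 : A * r ^+ 2 * (dd * (r ^+ 2 * X)) <= A * dd * r ^+ 4 * X ^+ 2.
  have : X <= X ^+ 2 by rewrite expr2 ler_peMl.
  move=> hXX; rewrite (_ : A * r ^+ 2 * (dd * (r ^+ 2 * X)) = A * dd * r ^+ 4 * X); last by ring.
  by rewrite ler_wpM2l // !mulr_ge0 // ?exprn_ge0 // ltW.
have e2 : B * (dd * (r ^+ 2 * X)) * (dd * (r ^+ 2 * X) + dd * ((L + 1) * r ^+ 2))
     <= B * dd ^+ 2 * (L + 2) * r ^+ 4 * X ^+ 2.
  have hXL : X + (L + 1) <= X * (L + 2) by nra.
  rewrite (_ : B * (dd * (r ^+ 2 * X)) * (dd * (r ^+ 2 * X) + dd * ((L + 1) * r ^+ 2))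
      = (B * dd ^+ 2 * r ^+ 4 * X) * (X + (L + 1))); last by ring.
  rewrite (_ : B * dd ^+ 2 * (L + 2) * r ^+ 4 * X ^+ 2 = (B * dd ^+ 2 * r ^+ 4 * X) * (X * (L + 2))); last by ring.
  by rewrite ler_wpM2l // !mulr_ge0 // ?sqr_ge0 // ?exprn_ge0 // ltW.
have e3 : M * r ^+ 4 * X ^+ 2 <= kappa / (2 * C1) * r ^+ 3.
  have h1 : 2 * C1 * (M * X ^+ 2 * r) <= kappa.
    have : 2 * C1 * (M * X ^+ 2 * r) * C1 <= C1 * kappa.
      apply: le_trans hN; rewrite (_ : 2 * (M + 1) * C1 ^+ 2 * X ^+ 2 * r
          = 2 * C1 * (M * X ^+ 2 * r) * C1 + 2 * C1 ^+ 2 * X ^+ 2 * r); last by ring.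
      by rewrite lerDl !mulr_ge0 // ?sqr_ge0 // ltW.
    by rewrite mulrC ler_pM2l.
  have h2 : M * X ^+ 2 * r <= kappa / (2 * C1).
    by rewrite ler_pdivlMr ?mulr_gt0 // mulrC.
  rewrite (_ : M * r ^+ 4 * X ^+ 2 = (M * X ^+ 2 * r) * r ^+ 3); last by ring.
  by rewrite ler_wpM2r // ?exprn_ge0 // ltW.
have e4 : r ^+ 2 * kappa / (C1 / r) = kappa / (2 * C1) * r ^+ 3 * 2.
  by field; rewrite ?gt_eqF.
rewrite e4 (_ : kappa / (2 * C1) * (r ^+ 2 * r) = kappa / (2 * C1) * r ^+ 3); last by ring.
rewrite /M in e3; lra.
Qed.

Lemma near_ex (R : realType) (P : R -> Prop) : (\forall h \near 0^'+, P h) ->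
  exists h0 : R, 0 < h0 /\ forall h, 0 < h < h0 -> P h.
Proof.
move=> /nbhs_ballP [e /= e0 he]; exists e; split => // h /andP [h0 he'].
apply: he => //; rewrite /ball /= sub0r normrN gtr0_norm //.
Qed.

Theorem proposition4p1
  (R : realType) (d : nat) (D : set 'rV[R]_d)
  (sigma : R) (Delta Dinv : R -> R)
  (t0 kappa L : R) (vartheta : 'rV[int]_d)
  (K : nat -> R -> 'rV[R]_d -> R)      (* K j t I = K_j(I;t) *)
  (K0h : R -> R -> 'rV[R]_d -> R)      (* K0h t h I = K^0(I;t,h) *)
  (hD : bounded_convex_domain D)
  (hsig : 0 < sigma) (hDelta : sigma_approx sigma Delta)
  (hDinv : is_inverse_of Delta Dinv)
  (ht0 : 0 < t0) (hkappa : 0 < kappa) (hL : 0 < L)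
  (hKsmooth : forall j t, 0 < t < t0 -> smooth_on D (K j t))
  (hKbound : forall j (vs : seq 'rV[R]_d), exists C : R,
      forall t, 0 < t < t0 -> forall x, D x ->
        `| iter_dd (K j t) vs x | <= C * \prod_(v <- vs) enorm v)
  (hK0smooth : forall t h, 0 < t < t0 -> 0 < h -> smooth_on D (K0h t h))
  (hK0asymp : forall (N : nat) (vs : seq 'rV[R]_d), exists C h1 : R, 0 < h1 /\
      forall h t, 0 < h < h1 -> 0 < t < t0 -> forall x, D x ->
        `| iter_dd (fun I => K0h t h I - \sum_(j < N) h ^+ j * K j t I) vs x |
          <= C * h ^+ N * \prod_(v <- vs) enorm v) :
  forall C1 : R, 0 < C1 ->
  (C1 * kappa * powR h (- (1 / 2)) / (Dinv (C1 * powR h (- (1 / 2)))) ^+ 2)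
     @[h --> 0^'+] --> +oo ->
  exists C2 : R, 0 < C2 /\ exists h0 : R, 0 < h0 /\
  forall h t, 0 < h < h0 -> 0 < t < t0 ->
  forall m m' : 'rV[int]_d, m != m' ->
    D (Iq h vartheta m) -> D (Iq h vartheta m') ->
    Mh D (K 0%N t) Delta kappa L h vartheta m ->
    enorm (Iq h vartheta m - Iq h vartheta m') <= h * Dinv (C1 * powR h (- (1 / 2))) ->
    C2 * powR h (3 / 2) <= `| K0h t h (Iq h vartheta m) - K0h t h (Iq h vartheta m') |.
Proof.
move=> C1 hC1 hlim.
case: hD => _ [_ [_ hconv]].
case: hDelta => _ [hmono [hpos _]].
have [Cf hCf] := choice (fun p : 'I_d * 'I_d => hKbound 0%N [:: ebasis R p.1; ebasis R p.2]).
set B := \sum_(p : 'I_d * 'I_d) `|Cf p|.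
have hB0 : 0 <= B by apply: sumr_ge0.
have hBb : forall t, 0 < t < t0 -> forall i j z, D z ->
    `|'D_(ebasis R i) ('D_(ebasis R j) (K 0%N t)) z| <= B.
  move=> t ht i j z Dz; have := hCf (i, j) t ht z Dz.
  rewrite /= !big_cons big_nil !enorm_ebasis !mulr1 => h1.
  apply: le_trans h1 _; apply: le_trans (ler_norm _) _.
  by rewrite /B (bigD1 (i, j)) //= lerDl sumr_ge0.
have [Af hAf] := choice (fun i : 'I_d => hK0asymp 1%N [:: ebasis R i]).
have [Hf hHf] := choice hAf.
set A := \sum_(i < d) `|Af i|.
have hA0 : 0 <= A by apply: sumr_ge0.
have hAb : forall h, 0 < h -> (forall i, h < Hf i) -> forall t, 0 < t < t0 ->
    forall i z, D z -> `|'D_(ebasis R i) (fun I => K0h t h I - K 0%N t I) z| <= A * h.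
  move=> h h0 hh t ht i z Dz.
  have := (hHf i).2 h t (introT andP (conj h0 (hh i))) ht z Dz.
  rewrite (_ : (fun I => K0h t h I - \sum_(j < 1) h ^+ j * K j t I)
      = (fun I => K0h t h I - K 0%N t I)); last first.
    by apply/funext => I; rewrite big_ord1 expr0 mul1r.
  rewrite /= big_cons big_nil enorm_ebasis !mulr1 expr1 => h1.
  apply: le_trans h1 _; rewrite ler_pM2r //.
  apply: le_trans (ler_norm _) _.
  by rewrite /A (bigD1 i) //= lerDl sumr_ge0.
set Nbig := 2 * (A * d%:R + B * d%:R ^+ 2 * (L + 2) + 1) * C1 ^+ 2.
have hD0 : 0 < Delta 0 by apply: hpos.
set c := (C1 / Delta 0) ^+ 2.
have c0 : 0 < c by rewrite /c exprn_gt0 // divr_gt0.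
have hnear : \forall h \near 0^'+, (forall i, h < Hf i) /\ h < c /\
    Nbig <= C1 * kappa * powR h (- (1 / 2)) / (Dinv (C1 * powR h (- (1 / 2)))) ^+ 2.
  near=> h; split; [|split].
  - near: h; apply: filter_forall => i; apply: nbhs_right_lt; exact: (hHf i).1.
  - near: h; exact: nbhs_right_lt c0.
  - near: h; exact: (cvgry_ge hlim Nbig).
have [h0 [h00 hh0]] := @near_ex _ _ hnear.
exists (kappa / (2 * C1)); split; first by rewrite divr_gt0 // mulr_gt0.
exists h0; split => //.
move=> h t hh ht m m' hmm' Dx Dy hM hxy.
have [hHi [hc hN]] := hh0 h hh.
case/andP: hh => hpos0 hlt.
set r := Num.sqrt h.
have r0 : 0 < r by rewrite sqrtr_gt0.
have hr2 : h = r ^+ 2 by rewrite sqr_sqrtr // ltW.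
have hpw : powR h (- (1 / 2)) = r^-1 by rewrite powRN div1r powR12_sqrt // ltW.
have hpw3 : powR h (3 / 2) = h * r.
  rewrite (_ : (3 / 2 : R) = 1 + 2^-1); last by field.
  by rewrite powRD ?gt_eqF ?implybT // powRr1 ?ltW // powR12_sqrt // ltW.
rewrite hpw in hN hxy; rewrite hpw3.
set Y := C1 * r^-1.
have hY : Delta 0 <= Y.
  have : r < C1 / Delta 0.
    have := hc; rewrite /c -ltr_sqrt ?exprn_gt0 // ?divr_gt0 // sqrtr_sqr gtr0_norm //.
    by rewrite divr_gt0.
  rewrite ltr_pdivlMr // => h1; rewrite /Y ler_pdivlMr //; rewrite mulrC; exact: ltW.
have [hX0 hXY] := hDinv Y hY.
set X := Dinv Y in hxy hN hX0 hXY.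
have hlt2 : (setdist (Ekappa D (K 0%N t) Delta kappa) (Iq h vartheta m)
     < ((L + 1) * h)%:E)%E.
  apply: le_lt_trans hM _; rewrite lte_fin; lra.
have [z [E hE <-] hz] := ereal_inf_lt hlt2.
rewrite lte_fin in hz.
set x := Iq h vartheta m in Dx hxy hz *.
set y := Iq h vartheta m' in Dy hxy *.
set k := m - m'.
have hk : k != 0 by rewrite subr_eq0.
have hv : x - y = h *: rvec R k by apply/rowP => i; rewrite !mxE intrB; ring.
have hG1 : forall z, D z -> differentiable (fun I => K0h t h I - K 0%N t I) z.
  move=> z0 Dz; apply: (@differentiableB _ _ _ (K0h t h) (K 0%N t)).
  - exact: (hK0smooth t h ht hpos0 [::] z0 Dz).
  - exact: (hKsmooth 0%N t ht [::] z0 Dz).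
have hcore := @core R d D (K 0%N t) (K0h t h) Delta kappa L h X Y A B x y E k hconv
  (fun z Dz => hKsmooth 0%N t ht [::] z Dz)
  (fun i z Dz => hKsmooth 0%N t ht [:: ebasis R i] z Dz)
  (hBb t ht) hG1 (hAb h hpos0 hHi t ht) Dx Dy hk hv hE (ltW hz) hxy hpos0 hkappa
  hmono hpos hXY hA0 hB0.
have hX1 : 1 <= X.
  have hxy' := hxy.
  have := @enormZ R d h (rvec R k); rewrite -hv gtr0_norm // => e.
  rewrite e ler_pM2l // in hxy'.
  exact: le_trans (@enorm_rvec_ge1 R d k hk) hxy'.
have hXp : 0 < X by lra.
rewrite ler_pdivlMr ?exprn_gt0 // in hN.
rewrite ler_pdivlMr // in hN.
apply: le_trans hcore; apply: arith => //; lra.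
Unshelve. all: by end_near.
Qed.
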